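(* For every $\varepsilon>0$ and every $\alpha<1$ there exists $\delta>0$ such that the following holds. Let $G$ be a connected graph on vertex set $[n]$, let $R\sim G(n,\varepsilon/n)$ and $G^*=G\cup R$. Then asymptotically almost surely, for every set $S\subseteq [n]$ with $0<|S|\le \alpha n$, $$|\partial_{G^*}S|\ge \frac{\delta}{\log(en/|S|)}\,|S|.$$ In particular, asymptotically almost surely $c(G^* )\ge \frac{\delta}{\log(en)}$.
   Context: $G(n,p)$ denotes the binomial random graph on $[n]$ with each pair an edge independently with probability $p$; $G\cup R$ is the graph on $[n]$ with edge set the union of those of $G$ and $R$. For a graph $H$ and a vertex set $S$, $\partial_H S$ is the set of edges of $H$ with exactly one endpoint in $S$. The Cheeger constant is $c(H)=\min\{|\partial_H U|/|U| : 0<|U|\le |V(H)|/2\}$. Asymptotically almost surely means with probability tending to $1$ as $n\to\infty$, for an arbitrary sequence of such graphs $G=G_n$. *)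

(* Defs.v *)
(* classical reals. Vertex set [n] is {0,...,n-1}. *)
From Stdlib Require Import Reals List Arith Bool ClassicalEpsilon Relations.
Import ListNotations.
Open Scope R_scope.

(* All subsets of a list, as sublists (each subset exactly once when l has no duplicates). *)
Fixpoint sublists {A : Type} (l : list A) : list (list A) :=
  match l with
  | [] => [[]]
  | x :: l' => map (cons x) (sublists l') ++ sublists l'
  end.

(* Unordered pairs {i,j} with i < j < n, i.e. the potential edges of a graph on [n]. *)
Definition pairs (n : nat) : list (nat * nat) :=
  flat_map (fun j => map (fun i => (i, j)) (seq 0 j)) (seq 0 n).

Definition simple_graph (G : nat -> nat -> bool) : Prop :=
  (forall i j, G i j = G j i) /\ (forall i, G i i = false).

Definition connected (n : nat) (G : nat -> nat -> bool) : Prop :=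
  forall u v, (u < n)%nat -> (v < n)%nat ->
    clos_refl_trans nat (fun x y => (x < n)%nat /\ (y < n)%nat /\ G x y = true) u v.

Definition adj_of (R : list (nat * nat)) (i j : nat) : bool :=
  existsb (fun e => ((fst e =? i) && (snd e =? j)) || ((fst e =? j) && (snd e =? i)))%nat R.

Definition graph_union (G : nat -> nat -> bool) (R : list (nat * nat)) (i j : nat) : bool :=
  G i j || adj_of R i j.

Definition memb (S : list nat) (i : nat) : bool := existsb (Nat.eqb i) S.

Definition boundary (n : nat) (H : nat -> nat -> bool) (S : list nat) : nat :=
  length (filter (fun e => H (fst e) (snd e) && xorb (memb S (fst e)) (memb S (snd e)))
                 (pairs n)).

(* Cheeger constant: min over nonempty U ⊆ [n] with |U| <= n/2 of |∂U|/|U|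
   (set to 0 when there is no such U, i.e. n < 2). *)
Definition cheeger (n : nat) (H : nat -> nat -> bool) : R :=
  let rs := map (fun U => INR (boundary n H U) / INR (length U))
                (filter (fun U => (0 <? length U)%nat && (2 * length U <=? n)%nat)
                        (sublists (seq 0 n))) in
  match rs with
  | [] => 0
  | r :: rs' => fold_right Rmin r rs'
  end.

(* Probability, under G(n,p) (edge set R = random subset of pairs n, each pair kept
   independently with probability p), of the event E. *)
Definition prob_Gnp (n : nat) (p : R) (E : list (nat * nat) -> Prop) : R :=
  fold_right Rplus 0
    (map (fun R => if excluded_middle_informative (E R)
                   then p ^ length R * (1 - p) ^ (length (pairs n) - length R)
                   else 0)
         (sublists (pairs n))).

(* Main.v *)
Require Import Defs.
From Stdlib Require Import Reals List.
Open Scope R_scope.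
From Stdlib Require Import Lra Lia Relations Bool Arith Classical ClassicalEpsilon.
Import ListNotations.

Open Scope R_scope.

Definition sumR {A : Type} (f : A -> R) (l : list A) : R := fold_right Rplus 0 (map f l).
Definition prodR {A : Type} (f : A -> R) (l : list A) : R := fold_right Rmult 1 (map f l).

Lemma sumR_app {A} (f : A -> R) l1 l2 : sumR f (l1 ++ l2) = sumR f l1 + sumR f l2.
Proof. induction l1; simpl; unfold sumR in *; simpl; try rewrite IHl1; lra. Qed.

Lemma sumR_map {A B} (f : B -> R) (g : A -> B) l : sumR f (map g l) = sumR (fun x => f (g x)) l.
Proof. unfold sumR; rewrite map_map; reflexivity. Qed.

Lemma sumR_ext {A} (f g : A -> R) l : (forall x, In x l -> f x = g x) -> sumR f l = sumR g l.
Proof. induction l; intros H; unfold sumR in *; simpl; auto.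
  rewrite H by (left; auto). rewrite IHl; auto. intros; apply H; right; auto. Qed.

Lemma sumR_le {A} (f g : A -> R) l : (forall x, In x l -> f x <= g x) -> sumR f l <= sumR g l.
Proof. induction l; intros H; unfold sumR in *; simpl. lra.
  assert (f a <= g a) by (apply H; left; auto).
  assert (fold_right Rplus 0 (map f l) <= fold_right Rplus 0 (map g l)) by (apply IHl; intros; apply H; right; auto). lra. Qed.

Lemma sumR_scal {A} (c : R) (f : A -> R) l : sumR (fun x => c * f x) l = c * sumR f l.
Proof. induction l; unfold sumR in *; simpl. lra. rewrite IHl; lra. Qed.

Lemma sumR_plus {A} (f g : A -> R) l : sumR (fun x => f x + g x) l = sumR f l + sumR g l.
Proof. induction l; unfold sumR in *; simpl. lra. rewrite IHl; lra. Qed.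

Lemma sumR_minus {A} (f g : A -> R) l : sumR (fun x => f x - g x) l = sumR f l - sumR g l.
Proof. induction l; unfold sumR in *; simpl. lra. rewrite IHl; lra. Qed.

Lemma sumR_nonneg {A} (f : A -> R) l : (forall x, In x l -> 0 <= f x) -> 0 <= sumR f l.
Proof. intros H. replace 0 with (sumR (fun _ : A => 0) l).
  apply sumR_le; auto. induction l; unfold sumR in *; simpl; auto. rewrite IHl. lra. intros; apply H; right; auto. Qed.

Lemma sumR_swap {A B} (f : A -> B -> R) l1 l2 :
  sumR (fun x => sumR (fun y => f x y) l2) l1 = sumR (fun y => sumR (fun x => f x y) l1) l2.
Proof. induction l1; unfold sumR in *; simpl.
  - induction l2; simpl; auto. rewrite <- IHl2. lra.
  - rewrite IHl1. fold (sumR (fun y => f a y + fold_right Rplus 0 (map (fun x => f x y) l1)) l2).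
    rewrite sumR_plus. reflexivity. Qed.

Lemma sumR_const {A} (c : R) (l : list A) : sumR (fun _ => c) l = INR (length l) * c.
Proof. induction l; unfold sumR in *. simpl; lra. cbn [length map fold_right]. rewrite IHl, S_INR. lra. Qed.

Lemma sumR_ge_term {A} (f : A -> R) l x : (forall y, In y l -> 0 <= f y) -> In x l -> f x <= sumR f l.
Proof. induction l; intros H Hx; simpl in Hx. contradiction. unfold sumR in *; simpl.
  destruct Hx as [<-|Hx].
  - assert (0 <= fold_right Rplus 0 (map f l)) by (apply (sumR_nonneg f l); intros; apply H; right; auto). lra.
  - assert (f x <= fold_right Rplus 0 (map f l)) by (apply IHl; auto; intros; apply H; right; auto).
    assert (0 <= f a) by (apply H; left; auto). lra. Qed.

Lemma length_filter_sumR {A} (P : A -> bool) l :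
  INR (length (filter P l)) = sumR (fun x => if P x then 1 else 0) l.
Proof. induction l; unfold sumR in *; simpl; auto. destruct (P a); cbn [length]; try rewrite S_INR; lra. Qed.

Lemma sublists_incl {A} (l S : list A) : In S (sublists l) -> incl S l.
Proof. revert S; induction l; simpl; intros S H.
  - destruct H as [<-|[]]. intros x [].
  - apply in_app_or in H. destruct H as [H|H].
    + apply in_map_iff in H. destruct H as [S1 [<- H1]].
      intros x [->|Hx]. left; auto. right; apply (IHl S1); auto.
    + intros x Hx; right; apply (IHl S); auto. Qed.

Lemma sublists_length {A} (l S : list A) : In S (sublists l) -> (length S <= length l)%nat.
Proof. revert S; induction l; simpl; intros S H.
  - destruct H as [<-|[]]. simpl; lia.
  - apply in_app_or in H. destruct H as [H|H].
    + apply in_map_iff in H. destruct H as [S1 [<- H1]]. simpl. specialize (IHl _ H1). lia.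
    + specialize (IHl _ H). lia. Qed.

Lemma sublists_NoDup_elem {A} (l S : list A) : NoDup l -> In S (sublists l) -> NoDup S.
Proof. revert S; induction l; simpl; intros S Hl H.
  - destruct H as [<-|[]]. constructor.
  - inversion Hl; subst. apply in_app_or in H. destruct H as [H|H].
    + apply in_map_iff in H. destruct H as [S1 [<- H1]]. constructor.
      intro Ha. apply (sublists_incl _ _ H1) in Ha. contradiction.
      apply IHl; auto.
    + apply IHl; auto. Qed.

Lemma sublists_NoDup {A} (l : list A) : NoDup l -> NoDup (sublists l).
Proof. induction l; simpl; intros Hl. constructor. simpl; auto. constructor.
  inversion Hl; subst. apply NoDup_app.
  - apply NoDup_map_NoDup_ForallPairs. intros x y _ _ E. inversion E; auto. auto.
  - auto.
  - intros S HA HB. apply in_map_iff in HA. destruct HA as [S1 [<- _]].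
    apply H1. apply (sublists_incl _ _ HB a). left; auto.
Qed.

Lemma filter_in_sublists {A} (f : A -> bool) l : In (filter f l) (sublists l).
Proof. induction l; simpl. left; auto. destruct (f a); apply in_or_app; [left|right]; auto.
  apply in_map; auto. Qed.

Lemma sublists_ext {A} (l S S' : list A) : NoDup l -> In S (sublists l) -> In S' (sublists l) ->
  (forall x, In x l -> (In x S <-> In x S')) -> S = S'.
Proof. revert S S'; induction l; simpl; intros S S' Hl H H' E.
  - destruct H as [<-|[]]; destruct H' as [<-|[]]; auto.
  - inversion Hl as [|? ? Hna Hnd]; subst.
    apply in_app_or in H; apply in_app_or in H'.
    destruct H as [H|H]; destruct H' as [H'|H'].
    + apply in_map_iff in H; destruct H as [S1 [<- H1]].
      apply in_map_iff in H'; destruct H' as [S2 [<- H2]].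
      f_equal. apply IHl; [exact Hnd|exact H1|exact H2|]. intros x Hx.
      assert (Hxa : x <> a) by (intros ->; contradiction).
      specialize (E x (or_intror Hx)). simpl in E.
      split; intro Hy.
      * destruct (proj1 E (or_intror Hy)) as [Ee|Ee]; [congruence|exact Ee].
      * destruct (proj2 E (or_intror Hy)) as [Ee|Ee]; [congruence|exact Ee].
    + apply in_map_iff in H; destruct H as [S1 [<- H1]].
      exfalso. assert (Ha : In a S') by (apply E; [left; auto | left; auto]).
      apply Hna, (sublists_incl _ _ H'); exact Ha.
    + apply in_map_iff in H'; destruct H' as [S1 [<- H1]].
      exfalso. assert (Ha : In a S) by (apply E; [left; auto | left; auto]).
      apply Hna, (sublists_incl _ _ H); exact Ha.
    + apply IHl; [exact Hnd|exact H|exact H'|]. intros x Hx. apply E. right; auto. Qed.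

Lemma gen_fun {A} (a b : R) (h : A -> R) (l : list A) :
  sumR (fun T => a ^ length T * b ^ (length l - length T) * prodR h T) (sublists l)
  = prodR (fun e => a * h e + b) l.
Proof. induction l as [|x l IH]; simpl.
  - unfold sumR, prodR; simpl; lra.
  - rewrite sumR_app, sumR_map.
    rewrite (sumR_ext _ (fun T => (a * h x) * (a ^ length T * b ^ (length l - length T) * prodR h T))).
    2:{ intros T _. simpl. unfold prodR; simpl. ring. }
    rewrite (sumR_ext (fun T => a ^ length T * b ^ (S (length l) - length T) * prodR h T)
       (fun T => b * (a ^ length T * b ^ (length l - length T) * prodR h T))).
    2:{ intros T HT. apply sublists_length in HT. replace (S (length l) - length T)%nat with (S (length l - length T)) by lia. simpl. ring. }
    rewrite !sumR_scal, IH. unfold prodR; simpl. ring. Qed.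

Lemma memb_In S i : memb S i = true <-> In i S.
Proof. unfold memb. rewrite existsb_exists. split.
  - intros [x [Hx E]]. apply Nat.eqb_eq in E. subst; auto.
  - intros H; exists i; split; auto. apply Nat.eqb_refl. Qed.

Lemma length_filter_mono {A} (f g : A -> bool) l : (forall x, In x l -> f x = true -> g x = true) ->
  (length (filter f l) <= length (filter g l))%nat.
Proof. induction l; simpl; intros H; auto.
  specialize (IHl (fun x Hx => H x (or_intror Hx))).
  destruct (f a) eqn:E.
  - rewrite (H a (or_introl eq_refl) E); simpl. lia.
  - destruct (g a); simpl; lia. Qed.

Lemma length_filter_or {A} (f g h : A -> bool) l : (forall x, In x l -> f x = true -> g x = true \/ h x = true) ->
  (length (filter f l) <= length (filter g l) + length (filter h l))%nat.
Proof. induction l; simpl; intros H; auto.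
  pose proof (H a (or_introl eq_refl)) as Ha.
  specialize (IHl (fun x Hx => H x (or_intror Hx))).
  destruct (f a); destruct (g a); destruct (h a); simpl; try lia.
  all: destruct (Ha eq_refl); discriminate. Qed.

Open Scope R_scope.

Lemma In_pairs n i j : In (i, j) (pairs n) <-> (i < j < n)%nat.
Proof. unfold pairs. rewrite in_flat_map. split.
  - intros [k [Hk H]]. apply in_map_iff in H. destruct H as [x [E Hx]]. inversion E; subst.
    apply in_seq in Hk. apply in_seq in Hx. lia.
  - intros H. exists j. split. apply in_seq; lia. apply in_map_iff. exists i; split; auto. apply in_seq; lia. Qed.

Lemma pairs_S n : pairs (S n) = pairs n ++ map (fun i => (i, n)) (seq 0 n).
Proof. unfold pairs. rewrite seq_S, flat_map_app. simpl. rewrite app_nil_r. reflexivity. Qed.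

Lemma pairs_NoDup n : NoDup (pairs n).
Proof. induction n. constructor. rewrite pairs_S. apply NoDup_app; auto.
  - apply NoDup_map_NoDup_ForallPairs. intros x y _ _ E; inversion E; auto. apply seq_NoDup.
  - intros [i j] H1 H2. apply In_pairs in H1. apply in_map_iff in H2. destruct H2 as [x [E _]].
    inversion E; subst. lia. Qed.

Lemma inj_length {A B} (f : A -> B) (l : list A) (l' : list B) : NoDup l ->
  (forall x y, In x l -> In y l -> f x = f y -> x = y) -> (forall x, In x l -> In (f x) l') ->
  (length l <= length l')%nat.
Proof. intros Hn Hi Hin. rewrite <- (length_map f l). apply NoDup_incl_length.
  - apply NoDup_map_NoDup_ForallPairs; [intros x y Hx Hy; apply Hi; auto | exact Hn].
  - intros y Hy. apply in_map_iff in Hy. destruct Hy as [x [<- Hx]]. auto. Qed.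

Definition cross (S : list nat) (e : nat * nat) : bool := xorb (memb S (fst e)) (memb S (snd e)).

Lemma boundary_mono n G Rg S : (boundary n G S <= boundary n (graph_union G Rg) S)%nat.
Proof. unfold boundary, graph_union. apply length_filter_mono. intros x _ H.
  apply andb_prop in H. destruct H as [H1 H2]. rewrite H1, H2. reflexivity. Qed.

Lemma adj_of_In Rg e : In e Rg -> adj_of Rg (fst e) (snd e) = true.
Proof. intros H. unfold adj_of. apply existsb_exists. exists e. split; auto.
  rewrite !Nat.eqb_refl. reflexivity. Qed.

Lemma boundary_ge_count n G Rg S : In Rg (sublists (pairs n)) ->
  (length (filter (cross S) Rg) <= boundary n (graph_union G Rg) S)%nat.
Proof. intros HR. unfold boundary. apply NoDup_incl_length.
  - apply NoDup_filter. apply (sublists_NoDup_elem (pairs n)); auto. apply pairs_NoDup.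
  - intros e He. apply filter_In in He. destruct He as [He Hc]. apply filter_In. split.
    + apply (sublists_incl _ _ HR); auto.
    + unfold graph_union. rewrite (adj_of_In _ _ He), orb_true_r. simpl. exact Hc. Qed.

Lemma NoDup_prod {A B} (l1 : list A) (l2 : list B) : NoDup l1 -> NoDup l2 -> NoDup (list_prod l1 l2).
Proof. induction l1; simpl; intros H1 H2. constructor. inversion H1; subst.
  apply NoDup_app. apply NoDup_map_NoDup_ForallPairs; auto. intros x y _ _ E; inversion E; auto.
  auto. intros [x y] Ha Hb. apply in_map_iff in Ha. destruct Ha as [z [E _]]. inversion E; subst.
  apply in_prod_iff in Hb. tauto. Qed.

Lemma memb_filter_length n S : In S (sublists (seq 0 n)) ->
  length (filter (memb S) (seq 0 n)) = length S.
Proof. intros HS. assert (NS : NoDup S) by (apply (sublists_NoDup_elem (seq 0 n)); auto; apply seq_NoDup).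
  apply Nat.le_antisymm; apply NoDup_incl_length; auto.
  - apply NoDup_filter, seq_NoDup.
  - intros x Hx. apply filter_In in Hx. apply memb_In; tauto.
  - intros x Hx. apply filter_In. split. apply (sublists_incl _ _ HS); auto. apply memb_In; auto. Qed.

Lemma cross_count n S : In S (sublists (seq 0 n)) ->
  (length S * (n - length S) <= length (filter (cross S) (pairs n)))%nat.
Proof. intros HS. assert (NS : NoDup S) by (apply (sublists_NoDup_elem (seq 0 n)); auto; apply seq_NoDup).
  set (C := filter (fun v => negb (memb S v)) (seq 0 n)).
  assert (LC : length C = (n - length S)%nat).
  { pose proof (filter_length (memb S) (seq 0 n)). rewrite memb_filter_length in H by auto.
    rewrite length_seq in H. unfold C. lia. }
  rewrite <- LC, <- length_prod.
  apply (inj_length (fun p => (Nat.min (fst p) (snd p), Nat.max (fst p) (snd p)))).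
  - apply NoDup_prod; auto. apply NoDup_filter, seq_NoDup.
  - intros [a b] [c d] H1 H2 E. apply in_prod_iff in H1, H2. simpl in E. inversion E.
    unfold C in *. destruct H1 as [H1a H1b], H2 as [H2a H2b].
    apply filter_In in H1b, H2b. apply memb_In in H1a, H2a.
    destruct H1b as [_ H1b], H2b as [_ H2b]. apply negb_true_iff in H1b, H2b.
    assert (a <> b) by (intros ->; congruence).
    assert (c <> d) by (intros ->; congruence).
    assert (Hab : (Nat.min a b = a /\ Nat.max a b = b) \/ (Nat.min a b = b /\ Nat.max a b = a)) by lia.
    assert (Hcd : (Nat.min c d = c /\ Nat.max c d = d) \/ (Nat.min c d = d /\ Nat.max c d = c)) by lia.
    destruct Hab as [[X1 X2]|[X1 X2]]; destruct Hcd as [[Y1 Y2]|[Y1 Y2]];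
      rewrite X1, Y1 in H0; rewrite X2, Y2 in H3; subst; congruence.
  - intros [a b] H. apply in_prod_iff in H. destruct H as [Ha Hb]. unfold C in Hb.
    apply filter_In in Hb. destruct Hb as [Hb Hb']. apply negb_true_iff in Hb'.
    pose proof (sublists_incl _ _ HS a Ha) as Ha'. apply in_seq in Ha', Hb.
    assert (Hm : memb S a = true) by (apply memb_In; auto).
    assert (a <> b) by congruence.
    apply filter_In. split. simpl. apply In_pairs.
    destruct (Nat.le_gt_cases a b); [rewrite Nat.min_l, Nat.max_r|rewrite Nat.min_r, Nat.max_l]; lia.
    unfold cross; simpl. destruct (Nat.le_gt_cases a b);
    [rewrite Nat.min_l, Nat.max_r|rewrite Nat.min_r, Nat.max_l]; try lia; rewrite Hm, Hb'; reflexivity.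
Qed.

Open Scope nat_scope.

Fixpoint walkn (n : nat) (G : nat -> nat -> bool) (k v : nat) : Prop :=
  match k with
  | 0 => v = 0
  | S k => walkn n G k v \/ exists u, walkn n G k u /\ u < n /\ v < n /\ G u v = true
  end.

Lemma walk_exists n G v : connected n G -> 0 < n -> v < n -> exists k, walkn n G k v.
Proof. intros HC Hn Hv. specialize (HC 0 v Hn Hv). apply clos_rt_rtn1 in HC.
  induction HC as [|y z Hyz _ IH]. exists 0; reflexivity.
  destruct Hyz as [Hy [Hz Gyz]]. destruct (IH Hy) as [k Hk]. exists (S k). simpl. right. exists y. auto. Qed.

Lemma min_ex (P : nat -> Prop) : (exists k, P k) -> exists k, P k /\ forall j, j < k -> ~ P j.
Proof. intros [k Hk]. revert Hk. pattern k; apply (well_founded_ind lt_wf); clear k. intros k IH Hk.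
  destruct (classic (exists j, j < k /\ P j)) as [[j [Hj Pj]]|Hno].
  - apply (IH j Hj Pj).
  - exists k. split; auto. intros j Hj Pj. apply Hno. exists j; auto. Qed.

Definition Tree (n : nat) (G : nat -> nat -> bool) (par d : nat -> nat) : Prop :=
  forall v, v < n -> v <> 0 -> par v < n /\ G v (par v) = true /\ d (par v) < d v.

Lemma tree_exists n G : simple_graph G -> connected n G -> 0 < n -> exists par d, Tree n G par d.
Proof. intros [Gsym Girr] HC Hn.
  assert (Hd : forall v, exists k, v < n -> walkn n G k v /\ forall j, j < k -> ~ walkn n G j v).
  { intros v. destruct (classic (v < n)) as [Hv|Hv].
    - destruct (min_ex _ (walk_exists n G v HC Hn Hv)) as [k Hk]. exists k; auto.
    - exists 0. intros; contradiction. }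
  set (d := fun v => proj1_sig (constructive_indefinite_description _ (Hd v))).
  assert (Hdp : forall v, v < n -> walkn n G (d v) v /\ forall j, j < d v -> ~ walkn n G j v).
  { intros v Hv. unfold d. destruct (constructive_indefinite_description _ (Hd v)) as [k Hk]. simpl. auto. }
  assert (Hp : forall v, exists u, v < n -> v <> 0 -> u < n /\ G v u = true /\ d u < d v).
  { intros v. destruct (classic (v < n /\ v <> 0)) as [[Hv H0]|Hv].
    2:{ exists 0. intros; exfalso; auto. }
    destruct (Hdp v Hv) as [W M]. destruct (d v) as [|j] eqn:E.
    - simpl in W. contradiction.
    - simpl in W. destruct W as [W|[u [Wu [Hu [_ Guv]]]]].
      + exfalso. apply (M j); auto.
      + exists u. intros _ _. split; auto. split. rewrite Gsym; auto.
        destruct (Nat.le_gt_cases (d u) j); try lia. exfalso. apply (proj2 (Hdp u Hu) j); auto. }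
  exists (fun v => proj1_sig (constructive_indefinite_description _ (Hp v))), d.
  intros v Hv H0. destruct (constructive_indefinite_description _ (Hp v)) as [u Hu]. simpl. auto. Qed.

Lemma tree_ind n G par d (T : Tree n G par d) (P : nat -> Prop) :
  (0 < n -> P 0) -> (forall v, v < n -> v <> 0 -> P (par v) -> P v) -> forall v, v < n -> P v.
Proof. intros H0 Hs.
  assert (forall m v, d v < m -> v < n -> P v).
  { induction m; intros v Hd Hv. lia. destruct (Nat.eq_dec v 0) as [->|Hne]; auto.
    destruct (T v Hv Hne) as [Hp [_ Hdp]]. apply Hs; auto. apply IHm; auto; lia. }
  intros v Hv. apply (H (S (d v))); auto. Qed.

Definition flip (par : nat -> nat) (S : list nat) (v : nat) : bool :=
  if v =? 0 then memb S 0 else xorb (memb S v) (memb S (par v)).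

Definition flipset (n : nat) (par : nat -> nat) (S : list nat) : list nat := filter (flip par S) (seq 0 n).

Lemma flipset_inj n G par d S S' : Tree n G par d -> In S (sublists (seq 0 n)) -> In S' (sublists (seq 0 n)) ->
  flipset n par S = flipset n par S' -> S = S'.
Proof. intros T HS HS' E. unfold flipset in E. rewrite filter_ext_in_iff in E.
  assert (M : forall v, v < n -> memb S v = memb S' v).
  { apply (tree_ind n G par d T).
    - intros Hn. specialize (E 0). unfold flip in E. simpl in E. apply E. apply in_seq; lia.
    - intros v Hv H0 IH. specialize (E v (proj2 (in_seq _ _ _) (conj (Nat.le_0_l v) Hv))).
      unfold flip in E. apply Nat.eqb_neq in H0. rewrite H0 in E. rewrite IH in E.
      destruct (memb S v), (memb S' v), (memb S' (par v)); simpl in E; congruence. }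
  apply (sublists_ext (seq 0 n)); auto. apply seq_NoDup.
  intros x Hx. apply in_seq in Hx. rewrite <- !memb_In. rewrite M by lia. tauto. Qed.

Lemma flip_edges n G par d S : simple_graph G -> Tree n G par d ->
  length (filter (fun v => flip par S v && negb (v =? 0)) (seq 0 n)) <= boundary n G S.
Proof. intros [Gsym Girr] T. unfold boundary.
  apply (inj_length (fun v => (Nat.min v (par v), Nat.max v (par v)))).
  - apply NoDup_filter, seq_NoDup.
  - intros v w Hv Hw E. apply filter_In in Hv, Hw. destruct Hv as [Hv Fv], Hw as [Hw Fw].
    apply andb_prop in Fv, Fw. destruct Fv as [_ Fv], Fw as [_ Fw].
    apply negb_true_iff, Nat.eqb_neq in Fv, Fw. apply in_seq in Hv, Hw.
    destruct (T v ltac:(lia) Fv) as [_ [_ Dv]]. destruct (T w ltac:(lia) Fw) as [_ [_ Dw]].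
    inversion E as [[E1 E2]].
    assert (v = w \/ (v = par w /\ w = par v)) as [|[X Y]] by lia; auto.
    exfalso. rewrite <- X, <- Y in *. lia.
  - intros v Hv. apply filter_In in Hv. destruct Hv as [Hv Fv]. apply andb_prop in Fv.
    destruct Fv as [Fv N]. apply negb_true_iff, Nat.eqb_neq in N. apply in_seq in Hv.
    destruct (T v ltac:(lia) N) as [Hp [Gp Dp]].
    assert (par v <> v) by (intro X; rewrite X in Dp; lia).
    unfold flip in Fv. apply Nat.eqb_neq in N. rewrite N in Fv.
    apply filter_In. split.
    + apply In_pairs. simpl. lia.
    + simpl. assert (Hc : v < par v \/ par v < v) by lia. destruct Hc.
      * rewrite Nat.min_l, Nat.max_r by lia. rewrite Gp, Fv. reflexivity.
      * rewrite Nat.min_r, Nat.max_l by lia. rewrite Gsym, Gp, xorb_comm, Fv. reflexivity.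
Qed.

Lemma flipset_length n G par d S : simple_graph G -> Tree n G par d ->
  length (flipset n par S) <= boundary n G S + 1.
Proof. intros HG T. unfold flipset.
  eapply Nat.le_trans. apply (length_filter_or _ (fun v => flip par S v && negb (v =? 0)) (fun v => v =? 0)).
  { intros x _ H. destruct (x =? 0); simpl; auto. rewrite H; auto. }
  pose proof (flip_edges n G par d S HG T).
  assert (length (filter (fun v => v =? 0) (seq 0 n)) <= 1).
  { change 1 with (length [0]). apply NoDup_incl_length. apply NoDup_filter, seq_NoDup.
    intros x Hx. apply filter_In in Hx. destruct Hx as [_ Hx]. apply Nat.eqb_eq in Hx. left; auto. }
  lia. Qed.

Lemma boundary_pos n G par d S : simple_graph G -> Tree n G par d -> In S (sublists (seq 0 n)) ->
  0 < length S -> length S < n -> 1 <= boundary n G S.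
Proof. intros HG T HS H1 H2. destruct (Nat.le_gt_cases 1 (boundary n G S)) as [|H]; auto. exfalso.
  pose proof (flip_edges n G par d S HG T) as FE.
  assert (Z : forall v, v < n -> v <> 0 -> flip par S v = false).
  { intros v Hv H0. destruct (flip par S v) eqn:F; auto. exfalso.
    assert (In v (filter (fun v => flip par S v && negb (v =? 0)) (seq 0 n))).
    { apply filter_In. split. apply in_seq; lia. rewrite F. apply Nat.eqb_neq in H0. rewrite H0; auto. }
    destruct (filter (fun v => flip par S v && negb (v =? 0)) (seq 0 n)); simpl in *. auto. lia. }
  assert (M : forall v, v < n -> memb S v = memb S 0).
  { apply (tree_ind n G par d T). auto. intros v Hv H0 IH. specialize (Z v Hv H0). unfold flip in Z.
    apply Nat.eqb_neq in H0. rewrite H0 in Z. rewrite <- IH. destruct (memb S v), (memb S (par v)); simpl in *; congruence. }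
  destruct (memb S 0) eqn:E.
  - assert (n <= length S); [|lia]. rewrite <- (length_seq n 0). apply NoDup_incl_length. apply seq_NoDup.
    intros x Hx. apply in_seq in Hx. apply memb_In. rewrite M; auto; lia.
  - destruct S as [|x S']. simpl in H1; lia. assert (Hx : x < n).
    { pose proof (sublists_incl _ _ HS x (or_introl eq_refl)). apply in_seq in H0. lia. }
    specialize (M x Hx). assert (memb (x :: S') x = true) by (apply memb_In; left; auto). congruence.
Qed.

Open Scope R_scope.

Definition wt (n : nat) (p : R) (Rg : list (nat * nat)) : R :=
  p ^ length Rg * (1 - p) ^ (length (pairs n) - length Rg).

Lemma prob_sumR n p E : prob_Gnp n p E =
  sumR (fun Rg => if excluded_middle_informative (E Rg) then wt n p Rg else 0) (sublists (pairs n)).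
Proof. reflexivity. Qed.

Lemma prodR_const {A} (c : R) (l : list A) : prodR (fun _ => c) l = c ^ length l.
Proof. induction l; unfold prodR in *; simpl; auto. rewrite IHl; reflexivity. Qed.

Lemma wt_nonneg n p Rg : 0 <= p <= 1 -> 0 <= wt n p Rg.
Proof. intros Hp. unfold wt. apply Rmult_le_pos; apply pow_le; lra. Qed.

Lemma wt_sum n p : sumR (wt n p) (sublists (pairs n)) = 1.
Proof. pose proof (gen_fun p (1 - p) (fun _ => 1) (pairs n)).
  rewrite (sumR_ext _ (wt n p)) in H. rewrite H, prodR_const.
  replace (p * 1 + (1 - p)) with 1 by ring. apply pow1.
  intros; unfold wt; rewrite prodR_const, pow1; ring.
Qed.

Lemma prob_le1 n p E : 0 <= p <= 1 -> prob_Gnp n p E <= 1.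
Proof. intros Hp. rewrite prob_sumR, <- (wt_sum n p). apply sumR_le. intros x _.
  destruct (excluded_middle_informative (E x)). lra. apply wt_nonneg; auto. Qed.

Lemma prob_mono n p (E E' : list (nat * nat) -> Prop) : 0 <= p <= 1 ->
  (forall Rg, In Rg (sublists (pairs n)) -> E Rg -> E' Rg) -> prob_Gnp n p E <= prob_Gnp n p E'.
Proof. intros Hp H. rewrite !prob_sumR. apply sumR_le. intros x Hx.
  destruct (excluded_middle_informative (E x)); destruct (excluded_middle_informative (E' x)).
  lra. exfalso; auto. apply wt_nonneg; auto. lra. Qed.

Definition hcr (cr : nat * nat -> bool) (e : nat * nat) : R := if cr e then exp (-1) else 1.

Lemma prodR_hcr cr Rg : prodR (hcr cr) Rg = exp (- INR (length (filter cr Rg))).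
Proof. induction Rg; unfold prodR in *; simpl. rewrite Ropp_0, exp_0; auto.
  rewrite IHRg. unfold hcr. destruct (cr a); cbn -[INR exp]. rewrite S_INR, <- exp_plus. f_equal. ring. ring. Qed.

Lemma exp1_ge2 : 2 <= exp 1.
Proof. pose proof (exp_ineq1_le 1). lra. Qed.

Lemma prod_bound p cr l : 0 <= p <= 1 ->
  prodR (fun e => p * hcr cr e + (1 - p)) l <= exp (- (p / 2) * INR (length (filter cr l))).
Proof. intros Hp. induction l; unfold prodR in *; simpl. rewrite Rmult_0_r, exp_0; lra.
  assert (He : 0 < exp (-1) <= / 2).
  { assert (E1 : exp (-1) * exp 1 = 1) by (rewrite <- exp_plus; replace (-1 + 1) with 0 by ring; apply exp_0).
    pose proof exp1_ge2. pose proof (exp_pos (-1)). split. lra. nra. }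
  assert (P0 : 0 <= fold_right Rmult 1 (map (fun e => p * hcr cr e + (1 - p)) l)).
  { clear IHl. induction l; simpl. lra. apply Rmult_le_pos; auto. unfold hcr; destruct (cr a0); nra. }
  unfold hcr at 1. destruct (cr a); cbn -[INR exp].
  - rewrite S_INR. replace (- (p / 2) * (INR (length (filter cr l)) + 1)) with
      (- (p/2) + - (p / 2) * INR (length (filter cr l))) by ring. rewrite exp_plus.
    apply Rmult_le_compat; try nra.
    pose proof (exp_ineq1_le (- (p / 2))). nra.
  - nra.
Qed.

Lemma union_bound {X : Type} n p (E : list (nat * nat) -> Prop) (Bs : list X) (t : X -> R)
  (cr : X -> nat * nat -> bool) : 0 <= p <= 1 ->
  (forall Rg, In Rg (sublists (pairs n)) -> ~ E Rg -> exists S, In S Bs /\ INR (length (filter (cr S) Rg)) < t S) ->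
  1 - sumR (fun S => exp (t S) * exp (- (p / 2) * INR (length (filter (cr S) (pairs n))))) Bs <= prob_Gnp n p E.
Proof. intros Hp Hcov.
  assert (Pt : forall Rg, In Rg (sublists (pairs n)) ->
    wt n p Rg - sumR (fun S => exp (t S) * (wt n p Rg * prodR (hcr (cr S)) Rg)) Bs <=
    (if excluded_middle_informative (E Rg) then wt n p Rg else 0)).
  { intros Rg HR. assert (W := wt_nonneg n p Rg Hp).
    assert (Nn : forall S, In S Bs -> 0 <= exp (t S) * (wt n p Rg * prodR (hcr (cr S)) Rg)).
    { intros S _. rewrite prodR_hcr. apply Rmult_le_pos. left; apply exp_pos. apply Rmult_le_pos; auto. left; apply exp_pos. }
    destruct (excluded_middle_informative (E Rg)) as [HE|HE].
    - pose proof (sumR_nonneg _ Bs Nn). lra.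
    - destruct (Hcov Rg HR HE) as [S [HS Ht]].
      pose proof (sumR_ge_term _ Bs S Nn HS). cbv beta in H. rewrite prodR_hcr in H.
      assert (1 <= exp (t S) * exp (- INR (length (filter (cr S) Rg)))).
      { rewrite <- exp_plus. rewrite <- exp_0. destruct (Req_dec (t S + - INR (length (filter (cr S) Rg))) 0) as [Z|Z].
        rewrite Z; lra. left. apply exp_increasing. lra. }
      nra. }
  rewrite prob_sumR. eapply Rle_trans. 2: apply (sumR_le _ _ _ Pt).
  rewrite sumR_minus, wt_sum, sumR_swap.
  assert (sumR (fun S => sumR (fun Rg => exp (t S) * (wt n p Rg * prodR (hcr (cr S)) Rg)) (sublists (pairs n))) Bs <=
     sumR (fun S => exp (t S) * exp (- (p / 2) * INR (length (filter (cr S) (pairs n))))) Bs); [|lra].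
  apply sumR_le. intros S _. rewrite sumR_scal. apply Rmult_le_compat_l. left; apply exp_pos.
  eapply Rle_trans. 2: apply prod_bound; auto. right. rewrite <- gen_fun. reflexivity.
Qed.


Open Scope R_scope.

Lemma sumR_filter {X} (f : X -> R) P L : sumR f (filter P L) = sumR (fun x => if P x then f x else 0) L.
Proof. induction L; unfold sumR in *; simpl; auto. destruct (P a); simpl; rewrite IHL; ring. Qed.

Lemma sumR_delta (c : R) (m N : nat) : (m < N)%nat -> sumR (fun k => if (m =? k)%nat then c else 0) (seq 0 N) = c.
Proof. induction N; intros H. lia. rewrite seq_S, sumR_app. simpl.
  destruct (Nat.eq_dec m N) as [->|Hne].
  - unfold sumR at 2; simpl. rewrite Nat.eqb_refl. rewrite (sumR_ext _ (fun _ => 0)). rewrite sumR_const. ring.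
    intros x Hx. apply in_seq in Hx. replace (N =? x)%nat with false; auto. symmetry; apply Nat.eqb_neq; lia.
  - rewrite IHN by lia. apply Nat.eqb_neq in Hne. unfold sumR; simpl. rewrite Hne. ring. Qed.

Lemma group_sum (f : list nat -> R) (L : list (list nat)) (n : nat) : (forall S, In S L -> (length S <= n)%nat) ->
  sumR f L = sumR (fun k => sumR f (filter (fun S => (length S =? k)%nat) L)) (seq 0 (n + 1)).
Proof. intros H. rewrite (sumR_ext _ (fun S => sumR (fun k => if (length S =? k)%nat then f S else 0) (seq 0 (n+1)))).
  - rewrite sumR_swap. apply sumR_ext. intros k _. rewrite sumR_filter. reflexivity.
  - intros S HS. rewrite sumR_delta; auto. specialize (H S HS). lia. Qed.

Lemma exp_pow x m : exp x ^ m = exp (INR m * x).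
Proof. induction m; simpl. rewrite Rmult_0_l, exp_0; auto. rewrite IHm, <- exp_plus. f_equal.
  destruct m; simpl; ring. Qed.

Definition rltb (a b : R) : bool := if Rlt_dec a b then true else false.

Lemma count_small (l : list nat) (T s : R) : 0 <= s ->
  INR (length (filter (fun F => rltb (INR (length F)) T) (sublists l))) <= exp (s * T + INR (length l) * exp (- s)).
Proof. intros Hs. rewrite length_filter_sumR.
  eapply Rle_trans. apply (sumR_le _ (fun F => exp (s * T) * (1 ^ length F * 1 ^ (length l - length F) * prodR (fun _ => exp (- s)) F))).
  - intros F _. rewrite !pow1, prodR_const, exp_pow, !Rmult_1_l, <- exp_plus. unfold rltb. destruct (Rlt_dec (INR (length F)) T).
    + rewrite <- exp_0 at 1. destruct (Req_dec (s * T + INR (length F) * - s) 0) as [Z|Z]. rewrite Z; lra.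
      left. apply exp_increasing. nra.
    + left; apply exp_pos.
  - rewrite sumR_scal, gen_fun, prodR_const, exp_plus. apply Rmult_le_compat_l. left; apply exp_pos.
    rewrite <- exp_pow. apply pow_incr. split. pose proof (exp_pos (-s)); lra.
    pose proof (exp_ineq1_le (exp (- s))). lra. Qed.

Open Scope R_scope.

Lemma ln_ge0 x : 1 <= x -> 0 <= ln x.
Proof. intros H. destruct (Req_dec x 1) as [->|Hne]. rewrite ln_1; lra.
  left. rewrite <- ln_1. apply ln_increasing; lra. Qed.

Lemma ln_le' x y : 0 < x -> x <= y -> ln x <= ln y.
Proof. intros Hx H. destruct (Req_dec x y) as [->|Hne]. lra. left. apply ln_increasing; lra. Qed.

Lemma div_ge1 a b : 0 < b <= a -> 1 <= a / b.
Proof. intros H. apply (Rmult_le_reg_r b). lra. unfold Rdiv. rewrite Rmult_assoc, Rinv_l by lra. lra. Qed.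

Lemma per_k (N x d th c0 t : R) :
  1 <= x <= N -> 0 < th <= 1 -> 0 < d -> d * (3 + 2 * ln (/ th)) <= c0 / 4 -> th <= c0 / 4 ->
  t = d / ln (exp 1 * N / x) * x -> 1 < t ->
  exp (ln (N / (th * x)) * (t + 1) + N * exp (- ln (N / (th * x)))) * exp (t - c0 * x) <= / (d ^ 3 * N ^ 3).
Proof. intros Hx Hth Hd Hdc Htc Ht Ht1.
  set (L := ln (exp 1 * N / x)) in *. set (Lam := ln (/ th)) in *. set (s := ln (N / (th * x))).
  assert (He1 : 2 <= exp 1) by apply exp1_ge2.
  assert (HN : 0 < N) by lra.
  assert (HNx : 0 < N / x) by (apply Rdiv_lt_0_compat; lra).
  assert (HL : 1 <= L).
  { unfold L. replace (exp 1 * N / x) with (exp 1 * (N / x)) by (field; lra).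
    rewrite ln_mult by (try apply exp_pos; auto). rewrite ln_exp.
    assert (0 <= ln (N / x)); [|lra]. apply ln_ge0. apply div_ge1. lra. }
  assert (HLam : 0 <= Lam).
  { unfold Lam. apply ln_ge0. apply (Rmult_le_reg_r th). lra. rewrite Rinv_l; lra. }
  assert (Hthx : 0 < th * x) by nra.
  assert (Hq : 0 < N / (th * x)) by (apply Rdiv_lt_0_compat; lra).
  assert (Hs0 : 0 <= s).
  { unfold s. apply ln_ge0. apply div_ge1. split; auto. nra. }
  assert (Hs : s = L + Lam - 1).
  { assert (E1 : exp 1 * N / x * / th = exp 1 * (N / (th * x))) by (field; lra).
    assert (E2 : ln (exp 1 * N / x * / th) = L + Lam).
    { unfold L, Lam. apply ln_mult. apply Rdiv_lt_0_compat; try lra. apply Rmult_lt_0_compat; lra.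
      apply Rinv_0_lt_compat; lra. }
    rewrite E1, ln_mult, ln_exp in E2 by (try apply exp_pos; auto). unfold s. lra. }
  assert (Hes : N * exp (- s) = th * x).
  { rewrite exp_Ropp. unfold s. rewrite exp_ln by auto. field. lra. }
  assert (HLp : 0 < L) by lra.
  assert (Hte : t <= d * x).
  { assert (HiL : / L <= 1) by (apply (Rmult_le_reg_r L); auto; rewrite Rinv_l; lra).
    assert (0 < / L) by (apply Rinv_0_lt_compat; lra).
    rewrite Ht. replace (d / L * x) with (d * x * / L) by (field; lra). nra. }
  assert (Hst : s * t <= d * x * (1 + Lam)).
  { rewrite Ht, Hs. replace ((L + Lam - 1) * (d / L * x)) with (d * x * ((L + Lam - 1) / L)) by (field; lra).
    apply Rmult_le_compat_l. nra. apply (Rmult_le_reg_r L); auto. unfold Rdiv. rewrite Rmult_assoc, Rinv_l by lra. nra. }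
  assert (Hexp : s * (t + 1) + N * exp (- s) + (t - c0 * x) <= - (6 * d * x)).
  { rewrite Hes. nra. }
  fold s. rewrite <- exp_plus.
  assert (HdxL : L < d * x).
  { rewrite Ht in Ht1. replace (d / L * x) with (d * x / L) in Ht1 by (field; lra).
    apply (Rmult_lt_compat_r L) in Ht1; auto. unfold Rdiv in Ht1. rewrite Rmult_assoc, Rinv_l in Ht1 by lra. lra. }
  set (Y := exp (d * x)).
  assert (HA : 0 < exp 1 * N / x) by (apply Rdiv_lt_0_compat; try lra; apply Rmult_lt_0_compat; lra).
  assert (HY1 : exp 1 * N / x <= Y).
  { unfold Y. rewrite <- (exp_ln (exp 1 * N / x)) by auto. fold L. left; apply exp_increasing; auto. }
  assert (HY2 : exp 1 * (d * x) <= Y).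
  { unfold Y. replace (d * x) with (1 + (d * x - 1)) at 2 by ring. rewrite exp_plus.
    apply Rmult_le_compat_l. lra. pose proof (exp_ineq1_le (d * x - 1)). lra. }
  assert (HYY : exp 1 * N / x * (exp 1 * (d * x)) <= Y * Y).
  { apply Rmult_le_compat; [left; exact HA | apply Rmult_le_pos; [lra|nra] | exact HY1 | exact HY2]. }
  replace (exp 1 * N / x * (exp 1 * (d * x))) with (exp 1 * exp 1 * (N * d)) in HYY by (field; lra).
  assert (Hpos : 0 < d ^ 3 * N ^ 3) by (apply Rmult_lt_0_compat; apply pow_lt; lra).
  assert (Hm : d ^ 3 * N ^ 3 <= (Y * Y) ^ 3).
  { replace (d ^ 3 * N ^ 3) with ((N * d) ^ 3) by ring. apply pow_incr.
    assert (0 < N * d) by nra. assert (1 <= exp 1 * exp 1) by nra. split. lra.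
    apply Rle_trans with (exp 1 * exp 1 * (N * d)); auto. nra. }
  assert (E6 : exp (- (6 * d * x)) = / ((Y * Y) ^ 3)).
  { rewrite exp_Ropp. f_equal. unfold Y. rewrite <- exp_plus, exp_pow. f_equal. simpl. ring. }
  apply Rle_trans with (exp (- (6 * d * x))).
  { destruct (Req_dec (s * (t + 1) + N * exp (- s) + (t - c0 * x)) (- (6 * d * x))) as [Z|Z].
    rewrite Z; lra. left; apply exp_increasing; lra. }
  rewrite E6. apply Rinv_le_contravar; auto.
Qed.

Open Scope R_scope.

Definition Ev n G (b d : R) (Rg : list (nat * nat)) : Prop :=
  forall S, In S (sublists (seq 0 n)) -> (0 < length S)%nat -> INR (length S) <= b * INR n ->
    INR (boundary n (graph_union G Rg) S) >= d / ln (exp 1 * INR n / INR (length S)) * INR (length S).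

Definition rleb (a b : R) : bool := if Rle_dec a b then true else false.

Lemma core (eps b d th c0 : R) : 0 < eps -> b < 1 -> c0 = eps * (1 - b) / 2 -> 0 < th <= 1 -> th <= c0 / 4 ->
  0 < d -> d * (3 + 2 * ln (/ th)) <= c0 / 4 ->
  forall n G, simple_graph G -> connected n G -> (1 <= n)%nat -> eps <= INR n ->
  1 - INR (n + 1) * / (d ^ 3 * INR n ^ 3) <= prob_Gnp n (eps / INR n) (Ev n G b d).
Proof. intros Heps Hb Hc0 Hth Htc Hd Hdc n G HG HC Hn HepsN.
  set (N := INR n) in *.
  assert (HN1 : 1 <= N) by (unfold N; apply (le_INR 1); auto).
  set (p := eps / N).
  assert (Hp : 0 <= p <= 1).
  { unfold p. split. left; apply Rdiv_lt_0_compat; lra. apply (Rmult_le_reg_r N). lra.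
    unfold Rdiv; rewrite Rmult_assoc, Rinv_l by lra. lra. }
  set (tS := fun S : list nat => d / ln (exp 1 * N / INR (length S)) * INR (length S)).
  set (Bs := filter (fun S => (0 <? length S)%nat && rleb (INR (length S)) (b * N)
                               && rltb (INR (boundary n G S)) (tS S)) (sublists (seq 0 n))).
  eapply Rle_trans; [|apply (union_bound n p _ Bs tS cross Hp)].
  2:{ intros Rg HR HE. apply NNPP. intros Hno. apply HE. intros S HS H0 Hbs.
      apply Rnot_lt_ge. intros Hlt. apply Hno. exists S. split.
      - unfold Bs. apply filter_In. split; auto.
        apply andb_true_intro; split; [apply andb_true_intro; split|].
        + apply Nat.ltb_lt; auto.
        + unfold rleb. destruct (Rle_dec (INR (length S)) (b * N)); auto.
        + unfold rltb. destruct (Rlt_dec (INR (boundary n G S)) (tS S)) as [|Hn']; auto.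
          exfalso. apply Hn'. eapply Rle_lt_trans; [|exact Hlt]. apply le_INR, boundary_mono.
      - eapply Rle_lt_trans; [|exact Hlt]. apply le_INR, boundary_ge_count; auto. }
  assert (HBs : forall S, In S Bs -> In S (sublists (seq 0 n)) /\ (0 < length S)%nat /\
             INR (length S) <= b * N /\ INR (boundary n G S) < tS S).
  { intros S HS. unfold Bs in HS. apply filter_In in HS. destruct HS as [HS B].
    apply andb_prop in B. destruct B as [B B3]. apply andb_prop in B. destruct B as [B1 B2].
    apply Nat.ltb_lt in B1. unfold rleb in B2. unfold rltb in B3.
    destruct (Rle_dec (INR (length S)) (b * N)); try discriminate.
    destruct (Rlt_dec (INR (boundary n G S)) (tS S)); try discriminate. auto. }
  assert (Hsum : sumR (fun S => exp (tS S) * exp (- (p / 2) * INR (length (filter (cross S) (pairs n))))) Bs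
                 <= INR (n + 1) * / (d ^ 3 * N ^ 3)); [|lra].
  eapply Rle_trans. apply (sumR_le _ (fun S => exp (tS S - c0 * INR (length S)))).
  { intros S HS. destruct (HBs S HS) as [HS1 [HS2 [HS3 HS4]]]. rewrite <- exp_plus.
    assert (Hk : (length S <= n)%nat) by (pose proof (sublists_length _ _ HS1); rewrite length_seq in H; auto).
    pose proof (le_INR _ _ (cross_count n S HS1)) as Hcc. rewrite mult_INR, minus_INR in Hcc by auto. fold N in Hcc.
    set (k := INR (length S)) in *. set (cc := INR (length (filter (cross S) (pairs n)))) in *.
    assert (Hk0 : 0 <= k) by (apply pos_INR).
    assert (HkN : k <= N) by (unfold k, N; apply le_INR; auto).
    assert (c0 * k <= p / 2 * cc).
    { apply Rle_trans with (p / 2 * (k * (N - k))).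
      - rewrite Hc0. unfold p. replace (eps / N / 2 * (k * (N - k))) with (eps * k / (2 * N) * (N - k)) by (field; lra).
        replace (eps * (1 - b) / 2 * k) with (eps * k / (2 * N) * ((1 - b) * N)) by (field; lra).
        apply Rmult_le_compat_l. unfold Rdiv; apply Rmult_le_pos; [nra| left; apply Rinv_0_lt_compat; lra].
        lra.
      - apply Rmult_le_compat_l; auto. lra. }
    destruct (Req_dec (tS S + - (p / 2) * cc) (tS S - c0 * k)) as [Z|Z]. rewrite Z; lra.
    left; apply exp_increasing. lra. }
  rewrite (group_sum _ _ n).
  2:{ intros S HS. destruct (HBs S HS) as [HS1 _]. pose proof (sublists_length _ _ HS1). rewrite length_seq in H; auto. }
  rewrite <- (length_seq (n + 1) 0) at 2. rewrite <- sumR_const. apply sumR_le. intros k _.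
  assert (Hpos : 0 < d ^ 3 * N ^ 3) by (apply Rmult_lt_0_compat; apply pow_lt; lra).
  set (Sk := filter (fun S => (length S =? k)%nat) Bs).
  assert (HSk : forall S, In S Sk -> In S Bs /\ length S = k).
  { intros S HS. unfold Sk in HS. apply filter_In in HS. destruct HS as [HS E]. apply Nat.eqb_eq in E; auto. }
  destruct Sk as [|S0 Sk'] eqn:ESk.
  { unfold sumR; simpl. left; apply Rinv_0_lt_compat; auto. }
  rewrite <- ESk in *.
  destruct (HSk S0 ltac:(rewrite ESk; left; auto)) as [HS0 Hl0].
  destruct (HBs S0 HS0) as [H01 [H02 [H03 H04]]].
  rewrite Hl0 in H02, H03.
  assert (Hkn : (k < n)%nat).
  { apply INR_lt. fold N. assert (0 < N) by lra. nra. }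
  destruct (tree_exists n G HG HC ltac:(lia)) as [par [dd T]].
  pose proof (boundary_pos n G par dd S0 HG T H01 ltac:(lia) ltac:(lia)) as Hb1.
  apply (le_INR 1) in Hb1. simpl in Hb1.
  set (t := d / ln (exp 1 * N / INR k) * INR k).
  assert (Ht : tS S0 = t) by (unfold tS, t; rewrite Hl0; reflexivity).
  assert (Ht1 : 1 < t) by lra.
  rewrite (sumR_ext _ (fun _ => exp (t - c0 * INR k))).
  2:{ intros S HS. destruct (HSk S HS) as [_ E]. unfold tS, t. rewrite E. reflexivity. }
  rewrite sumR_const.
  set (x := INR k).
  assert (Hx1 : 1 <= x) by (unfold x; apply (le_INR 1); lia).
  assert (HxN : x <= N) by (unfold x, N; apply le_INR; lia).
  set (s := ln (N / (th * x))).
  assert (Hs0 : 0 <= s).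
  { unfold s. apply ln_ge0. apply div_ge1. split. nra. nra. }
  set (FL := filter (fun F => rltb (INR (length F)) (t + 1)) (sublists (seq 0 n))).
  assert (HL : (length Sk <= length FL)%nat).
  { apply (inj_length (flipset n par)).
    - unfold Sk. apply NoDup_filter. unfold Bs. apply NoDup_filter. apply sublists_NoDup, seq_NoDup.
    - intros S S' HS HS' E. destruct (HSk S HS) as [HSb _]. destruct (HSk S' HS') as [HSb' _].
      destruct (HBs S HSb) as [X _]. destruct (HBs S' HSb') as [X' _].
      apply (flipset_inj n G par dd S S' T X X' E).
    - intros S HS. destruct (HSk S HS) as [HSb E]. destruct (HBs S HSb) as [X [_ [_ Y]]].
      unfold FL. apply filter_In. split. apply filter_in_sublists.
      unfold rltb. destruct (Rlt_dec _ _) as [|Hno]; auto. exfalso. apply Hno.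
      pose proof (flipset_length n G par dd S HG T) as Z. apply le_INR in Z. rewrite plus_INR in Z. simpl in Z.
      assert (tS S = t) by (unfold tS, t; rewrite E; reflexivity). lra. }
  apply le_INR in HL.
  pose proof (count_small (seq 0 n) (t + 1) s Hs0) as HC2. fold FL in HC2. rewrite length_seq in HC2. fold N in HC2.
  pose proof (per_k N x d th c0 t ltac:(lra) Hth Hd Hdc Htc eq_refl Ht1) as PK. fold s in PK.
  eapply Rle_trans; [|exact PK]. apply Rmult_le_compat_r. left; apply exp_pos. lra.
Qed.

Open Scope R_scope.

Lemma cv1 (u : nat -> R) (d : R) (n0 : nat) : 0 < d ->
  (forall n, (n0 <= n)%nat -> 1 - INR (n + 1) * / (d ^ 3 * INR n ^ 3) <= u n /\ u n <= 1) -> Un_cv u 1.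
Proof. intros Hd H e He.
  assert (Hd3 : 0 < d ^ 3) by (apply pow_lt; lra).
  destruct (INR_archimed (e * d ^ 3) 2) as [M HM]. nra.
  exists (Nat.max n0 (Nat.max M 1)). intros n Hn.
  destruct (H n ltac:(lia)) as [H1 H2].
  assert (HnM : INR M <= INR n) by (apply le_INR; lia).
  assert (Hn1 : 1 <= INR n) by (apply (le_INR 1); lia).
  set (m := INR n) in *.
  assert (Hq : INR (n + 1) * / (d ^ 3 * m ^ 3) < e).
  { rewrite plus_INR. fold m. simpl INR.
    assert (Hp : 0 < d ^ 3 * m ^ 3) by (apply Rmult_lt_0_compat; auto; apply pow_lt; lra).
    apply (Rmult_lt_reg_r (d ^ 3 * m ^ 3)); auto. rewrite Rmult_assoc, Rinv_l by lra.
    assert (Hed : 0 < e * d ^ 3) by nra. assert (e * d ^ 3 * m > 2) by nra.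
    replace (e * (d ^ 3 * m ^ 3)) with ((e * d ^ 3 * m) * (m * m)) by ring. set (Z := e * d ^ 3 * m) in *. assert (m <= m * m) by nra. assert (Z * m <= Z * (m * m)) by (apply Rmult_le_compat_l; lra). nra. }
  unfold R_dist. rewrite Rabs_left1 by lra. lra. Qed.

Lemma fold_min_ge (c r : R) (rs : list R) : c <= r -> (forall x, In x rs -> c <= x) -> c <= fold_right Rmin r rs.
Proof. induction rs; simpl; intros H1 H2; auto. apply Rmin_glb; auto. Qed.

Lemma filter_false_nil {X} (l : list X) : filter (fun _ => false) l = [].
Proof. induction l; simpl; auto. Qed.

Lemma cheeger_ge n G (b d : R) Rg : (2 <= n)%nat -> 1/2 <= b -> 0 < d -> Ev n G b d Rg ->
  cheeger n (graph_union G Rg) >= d / ln (exp 1 * INR n).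
Proof. intros Hn Hb Hd HE. unfold cheeger.
  set (N := INR n) in *.
  assert (HN : 2 <= N) by (unfold N; apply (le_INR 2); auto).
  assert (He1 := exp1_ge2).
  set (L := filter (fun U => (0 <? length U)%nat && (2 * length U <=? n)%nat) (sublists (seq 0 n))).
  assert (Hall : forall U, In U L -> d / ln (exp 1 * N) <= INR (boundary n (graph_union G Rg) U) / INR (length U)).
  { intros U HU. unfold L in HU. apply filter_In in HU. destruct HU as [HU B]. apply andb_prop in B.
    destruct B as [B1 B2]. apply Nat.ltb_lt in B1. apply Nat.leb_le in B2.
    set (k := INR (length U)).
    assert (Hk1 : 1 <= k) by (unfold k; apply (le_INR 1); lia).
    assert (Hk2 : 2 * k <= N) by (unfold k, N; rewrite <- (mult_INR 2); apply le_INR; auto).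
    specialize (HE U HU B1 ltac:(fold k N; nra)). fold k N in HE.
    set (l1 := ln (exp 1 * N / k)) in *. set (l2 := ln (exp 1 * N)).
    assert (Hq : 1 <= N / k) by (apply div_ge1; lra).
    assert (Hl1 : 1 <= l1).
    { unfold l1. replace (exp 1 * N / k) with (exp 1 * (N / k)) by (field; lra).
      rewrite ln_mult, ln_exp by (try apply exp_pos; lra). pose proof (ln_ge0 _ Hq). lra. }
    assert (Hl12 : l1 <= l2).
    { unfold l1, l2. apply ln_le'. apply Rdiv_lt_0_compat; try lra. nra.
      unfold Rdiv. rewrite <- (Rmult_1_r (exp 1 * N)) at 2. apply Rmult_le_compat_l. nra.
      rewrite <- Rinv_1. apply Rinv_le_contravar; lra. }
    apply Rle_trans with (d / l1).
    - unfold Rdiv. apply Rmult_le_compat_l. lra. apply Rinv_le_contravar; lra.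
    - apply (Rmult_le_reg_r k). lra. unfold Rdiv at 2. rewrite Rmult_assoc, Rinv_l by lra. lra. }
  assert (Hin : In [0%nat] L).
  { unfold L. apply filter_In. split.
    - replace [0%nat] with (filter (Nat.eqb 0) (seq 0 n)). apply filter_in_sublists.
      destruct n as [|n']. lia. simpl. f_equal. rewrite (filter_ext_in _ (fun _ => false)).
      apply filter_false_nil. intros a Ha. apply in_seq in Ha. destruct a; [lia|reflexivity].
    - apply andb_true_intro. split. reflexivity. apply Nat.leb_le. simpl length. lia. }
  destruct L as [|U0 L'] eqn:EL. destruct Hin.
  simpl. apply Rle_ge. apply fold_min_ge.
  - apply Hall. left; auto.
  - intros x Hx. apply in_map_iff in Hx. destruct Hx as [U [<- HU]]. apply Hall. right; auto.
Qed.

Theorem theorem2 :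
  forall (eps alpha : R), 0 < eps -> alpha < 1 ->
  exists delta : R, 0 < delta /\
  forall Gs : nat -> nat -> nat -> bool,
    (forall n, simple_graph (Gs n) /\ connected n (Gs n)) ->
    Un_cv (fun n => prob_Gnp n (eps / INR n) (fun Rg =>
       forall S : list nat, In S (sublists (seq 0 n)) ->
         (0 < length S)%nat -> INR (length S) <= alpha * INR n ->
         INR (boundary n (graph_union (Gs n) Rg) S)
           >= delta / ln (exp 1 * INR n / INR (length S)) * INR (length S))) 1
    /\
    Un_cv (fun n => prob_Gnp n (eps / INR n) (fun Rg =>
       cheeger n (graph_union (Gs n) Rg) >= delta / ln (exp 1 * INR n))) 1.
Proof.
  intros eps alpha Heps Ha.
  set (b := Rmax alpha (1/2)).
  assert (Hb1 : b < 1) by (unfold b; apply Rmax_lub_lt; lra).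
  assert (Hb2 : 1/2 <= b) by (unfold b; apply Rmax_r).
  assert (Hab : alpha <= b) by (unfold b; apply Rmax_l).
  set (c0 := eps * (1 - b) / 2).
  assert (Hc0 : 0 < c0) by (unfold c0; nra).
  set (th := c0 / (4 + c0)).
  assert (Hth : 0 < th <= 1).
  { unfold th. split. apply Rdiv_lt_0_compat; lra. apply (Rmult_le_reg_r (4 + c0)). lra.
    unfold Rdiv; rewrite Rmult_assoc, Rinv_l by lra. lra. }
  assert (Htc : th <= c0 / 4).
  { unfold th. unfold Rdiv. apply Rmult_le_compat_l. lra. apply Rinv_le_contravar; lra. }
  assert (HLam : 0 <= ln (/ th)).
  { apply ln_ge0. apply (Rmult_le_reg_r th). lra. rewrite Rinv_l; lra. }
  set (d := c0 / (4 * (3 + 2 * ln (/ th)))).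
  assert (Hd : 0 < d) by (unfold d; apply Rdiv_lt_0_compat; lra).
  assert (Hdc : d * (3 + 2 * ln (/ th)) <= c0 / 4) by (unfold d; right; field; lra).
  exists d. split; auto. intros Gs HGs.
  destruct (INR_archimed 1 eps) as [m Hm]. lra.
  assert (Hbig : forall n, (Nat.max m 2 <= n)%nat -> (1 <= n)%nat /\ eps <= INR n /\ 0 <= eps / INR n <= 1).
  { intros n Hn. assert (HmN : INR m <= INR n) by (apply le_INR; lia).
    assert (2 <= INR n) by (apply (le_INR 2); lia).
    split. lia. split. lra. split. left; apply Rdiv_lt_0_compat; lra.
    apply (Rmult_le_reg_r (INR n)). lra. unfold Rdiv; rewrite Rmult_assoc, Rinv_l by lra. lra. }
  split.
  - apply (cv1 _ d (Nat.max m 2)); auto. intros n Hn. destruct (Hbig n Hn) as [H1 [H2 H3]].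
    destruct (HGs n) as [HG HC]. split.
    + eapply Rle_trans. apply (core eps b d th c0 Heps Hb1 eq_refl Hth Htc Hd Hdc n (Gs n) HG HC H1 H2).
      apply prob_mono; auto. intros Rg _ HE S HS H0 HS2. apply HE; auto.
      apply Rle_trans with (alpha * INR n); auto. apply Rmult_le_compat_r; auto. apply pos_INR.
    + apply prob_le1; auto.
  - apply (cv1 _ d (Nat.max m 2)); auto. intros n Hn. destruct (Hbig n Hn) as [H1 [H2 H3]].
    destruct (HGs n) as [HG HC]. split.
    + eapply Rle_trans. apply (core eps b d th c0 Heps Hb1 eq_refl Hth Htc Hd Hdc n (Gs n) HG HC H1 H2).
      apply prob_mono; auto. intros Rg _ HE. apply (cheeger_ge n (Gs n) b d Rg); auto. lia.
    + apply prob_le1; auto.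
Qed.
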